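(* Let $a,b,c>0$ and let $F(x)=F(a,b;c;x)$ for $|x|<1$. Then: (1) If $ab/(a+b+1)<c$, then $\log F(x)$ is convex on $(0,1)$. In particular, $F((x+y)/2)\le\sqrt{F(x)F(y)}$ for all $x,y\in(0,1)$, with equality if and only if $x=y$. (2) If $(a-c)(b-c)>0$, then $t\mapsto\log F(1-e^{-t})$ is concave on $(0,\infty)$. In particular, $\sqrt{F(x)F(y)}\le F\big(1-\sqrt{(1-x)(1-y)}\big)$ for all $x,y\in(0,1)$, with equality if and only if $x=y$. (3) If $a+b\ge c$, then $t\mapsto F(1-e^{-t})$ is convex on $(0,\infty)$. In particular, $F\big(1-\sqrt{(1-x)(1-y)}\big)\le (F(x)+F(y))/2$ for all $x,y\in(0,1)$, with equality if and only if $x=y$.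
   Context: $F(a,b;c;x)={}_2F_1(a,b;c;x)=\sum_{n=0}^\infty\frac{(a,n)(b,n)}{(c,n)\,n!}x^n$ for $|x|<1$ is the Gaussian hypergeometric function, where $(a,0)=1$ and $(a,n)=a(a+1)\cdots(a+n-1)$ for $n\ge1$. *)

(* Defs.v *)
From Stdlib Require Import Reals.
From Coquelicot Require Import Coquelicot.
Open Scope R_scope.

Fixpoint poch (a : R) (n : nat) : R :=
  match n with
  | O => 1
  | S k => poch a k * (a + INR k)
  end.

Definition hyp_coef (a b c : R) (n : nat) : R :=
  poch a n * poch b n / (poch c n * INR (Factorial.fact n)).

Definition hyp2F1 (a b c x : R) : R :=
  Series (fun n => hyp_coef a b c n * x ^ n).

Definition convex_on (P : R -> Prop) (f : R -> R) : Prop :=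
  forall x y t, P x -> P y -> 0 <= t <= 1 ->
    f (t * x + (1 - t) * y) <= t * f x + (1 - t) * f y.

Definition concave_on (P : R -> Prop) (f : R -> R) : Prop :=
  forall x y t, P x -> P y -> 0 <= t <= 1 ->
    t * f x + (1 - t) * f y <= f (t * x + (1 - t) * y).

Definition unit_open (x : R) : Prop := 0 < x < 1.
Definition pos_open (t : R) : Prop := 0 < t.

(* Main.v *)
Require Import Defs.
From Stdlib Require Import Reals Lra Lia Psatz.
From Coquelicot Require Import Coquelicot.
Open Scope R_scope.

Lemma poch_pos a n : 0 < a -> 0 < poch a n.
Proof.
  intros ha; induction n as [|n IH]; simpl. lra.
  apply Rmult_lt_0_compat; auto. pose proof (pos_INR n); lra.
Qed.

Lemma coef_pos a b c n : 0 < a -> 0 < b -> 0 < c -> 0 < hyp_coef a b c n.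
Proof.
  intros. unfold hyp_coef. apply Rdiv_lt_0_compat.
  apply Rmult_lt_0_compat; apply poch_pos; auto.
  apply Rmult_lt_0_compat. apply poch_pos; auto. apply INR_fact_lt_0.
Qed.

Lemma coef_rec a b c n : 0 < a -> 0 < b -> 0 < c ->
  INR (S n) * hyp_coef a b c (S n) =
  hyp_coef a b c n * ((a + INR n) * (b + INR n) / (c + INR n)).
Proof.
  intros ha hb hc. unfold hyp_coef. simpl poch.
  change (Factorial.fact (S n)) with (S n * Factorial.fact n)%nat; rewrite mult_INR.
  pose proof (poch_pos c n hc). pose proof (INR_fact_lt_0 n).
  pose proof (pos_INR n). rewrite S_INR.
  field. repeat split; lra.
Qed.

Lemma lim_inv_S : is_lim_seq (fun n => / (INR n + 1)) 0.
Proof.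
  apply is_lim_seq_ext with (fun n => / INR (S n)).
  intros n; now rewrite S_INR.
  apply (is_lim_seq_incr_1 (fun n => / INR n)).
  replace (Finite 0) with (Rbar_inv p_infty) by reflexivity.
  apply is_lim_seq_inv. apply is_lim_seq_INR. discriminate.
Qed.

Lemma radius_coef a b c : 0 < a -> 0 < b -> 0 < c ->
  CV_radius (hyp_coef a b c) = 1.
Proof.
  intros ha hb hc.
  replace 1 with (/ 1) by field.
  apply CV_radius_finite_DAlembert.
  - intros n; pose proof (coef_pos a b c n ha hb hc); lra.
  - lra.
  - set (u := fun n => / (INR n + 1)).
    apply is_lim_seq_ext with
      (fun n => (1 + (a - 1) * u n) * (1 + (b - 1) * u n) / (1 + (c - 1) * u n)).
    + intros n. pose proof (coef_rec a b c n ha hb hc) as H.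
      pose proof (coef_pos a b c n ha hb hc). pose proof (pos_INR n).
      rewrite S_INR in H.
      assert (E : hyp_coef a b c (S n) / hyp_coef a b c n =
        (a + INR n) * (b + INR n) / ((c + INR n) * (INR n + 1))).
      { apply (Rmult_eq_reg_l (INR n + 1)). 2: lra.
        replace ((INR n + 1) * (hyp_coef a b c (S n) / hyp_coef a b c n))
          with (((INR n + 1) * hyp_coef a b c (S n)) / hyp_coef a b c n) by (field; lra).
        rewrite H. field. lra. }
      rewrite E. rewrite Rabs_pos_eq.
      unfold u. field. repeat split; try lra.
      apply Rlt_le, Rdiv_lt_0_compat; apply Rmult_lt_0_compat; lra.
    + assert (L: is_lim_seq (fun n => (1 + (a - 1) * u n) * (1 + (b - 1) * u n) / (1 + (c - 1) * u n)) ((1 + (a - 1) * 0) * (1 + (b - 1) * 0) / (1 + (c - 1) * 0))).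
      { apply is_lim_seq_div'; [ | | lra];
        repeat first [apply is_lim_seq_const | apply lim_inv_S | apply is_lim_seq_mult' | apply is_lim_seq_plus']. }
      replace ((1 + (a - 1) * 0) * (1 + (b - 1) * 0) / (1 + (c - 1) * 0)) with 1 in L by field. exact L.
Qed.

Lemma series_lim (u : nat -> R) l : is_series u l -> is_lim_seq (sum_f_R0 u) l.
Proof.
  intros H. apply is_series_Reals in H. apply is_lim_seq_Reals. exact H.
Qed.

Lemma lim_ge (s : nat -> R) (l : R) d N : is_lim_seq s l ->
  (forall n, (N <= n)%nat -> d <= s n) -> d <= l.
Proof.
  intros Hl Hd. apply (is_lim_seq_incr_n s N) in Hl.
  assert (H := is_lim_seq_le (fun _ => d) (fun n => s (n + N)%nat) d l).
  simpl in H. apply H. intros n; apply Hd; lia. apply is_lim_seq_const. exact Hl.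
Qed.

Lemma sum_nonneg (f : nat -> R) N : (forall k, (k <= N)%nat -> 0 <= f k) -> 0 <= sum_f_R0 f N.
Proof.
  induction N as [|N IH]; intros H; simpl. apply H; lia.
  apply Rplus_le_le_0_compat. apply IH; intros; apply H; lia. apply H; lia.
Qed.

Lemma partial_mono (f : nat -> R) N n : (forall k, 0 <= f k) -> (N <= n)%nat ->
  sum_f_R0 f N <= sum_f_R0 f n.
Proof.
  intros Hf Hn. induction Hn. lra. simpl. pose proof (Hf (S m)). lra.
Qed.

Lemma series_ge_partial (u : nat -> R) l N : is_series u l -> (forall n, 0 <= u n) ->
  sum_f_R0 u N <= l.
Proof.
  intros Hs Hu. apply (lim_ge _ _ _ N (series_lim _ _ Hs)).
  intros n Hn; apply partial_mono; auto.
Qed.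

Lemma mono_of_succ (r : nat -> R) : (forall n, r n < r (S n)) ->
  forall n m, (n <= m)%nat -> r n <= r m.
Proof.
  intros H n m Hnm. induction Hnm. lra. pose proof (H m); lra.
Qed.

Lemma pow_cross x y k m : 0 <= x <= y -> (k <= m)%nat -> x ^ m * y ^ k <= y ^ m * x ^ k.
Proof.
  intros Hxy Hkm. replace m with (k + (m - k))%nat by lia.
  rewrite !pow_add.
  pose proof (pow_incr x y (m - k) Hxy).
  pose proof (pow_le x k (proj1 Hxy)). pose proof (pow_le y k ltac:(lra)).
  pose proof (pow_le x (m-k) (proj1 Hxy)).
  assert (0 <= x ^ k * y ^ k) by (apply Rmult_le_pos; auto).
  nra.
Qed.

Lemma sum_lin (A B : nat -> R) al be p q x y N :
  sum_f_R0 (fun k => (al * B k - A k * be) * (p * x ^ k - q * y ^ k)) N =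
  al * p * sum_f_R0 (fun k => B k * x ^ k) N - al * q * sum_f_R0 (fun k => B k * y ^ k) N
  - be * p * sum_f_R0 (fun k => A k * x ^ k) N + be * q * sum_f_R0 (fun k => A k * y ^ k) N.
Proof.
  induction N as [|N IH]; simpl sum_f_R0. ring. rewrite IH. ring.
Qed.

Lemma ratio_lemma (A B r : nat -> R) x y SAx SAy SBx SBy :
  0 <= x < y -> (forall n, 0 < B n) -> (forall n, A n = r n * B n) ->
  (forall n, r n < r (S n)) ->
  is_series (fun n => A n * x ^ n) SAx -> is_series (fun n => A n * y ^ n) SAy ->
  is_series (fun n => B n * x ^ n) SBx -> is_series (fun n => B n * y ^ n) SBy ->
  0 < SAy * SBx - SAx * SBy.
Proof.
  intros Hxy HB HA Hr sAx sAy sBx sBy.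
  set (P := fun (C : nat -> R) z N => sum_f_R0 (fun n => C n * z ^ n) N).
  set (D := fun N => P A y N * P B x N - P A x N * P B y N).
  assert (Hstep : forall N, D N <= D (S N)).
  { intros N. unfold D, P. rewrite !tech5.
    assert (Hs := sum_lin A B (A (S N)) (B (S N)) (y ^ S N) (x ^ S N) x y N).
    assert (0 <= sum_f_R0 (fun k => (A (S N) * B k - A k * B (S N)) * (y ^ S N * x ^ k - x ^ S N * y ^ k)) N).
    { apply sum_nonneg. intros k Hk. apply Rmult_le_pos.
      rewrite !HA. pose proof (HB k). pose proof (HB (S N)).
      pose proof (mono_of_succ r Hr k (S N) ltac:(lia)).
      assert (0 <= B k * B (S N)) by (apply Rmult_le_pos; lra). nra.
      pose proof (pow_cross x y k (S N) ltac:(lra) ltac:(lia)). lra. }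
    match goal with |- ?L <= _ => apply Rle_trans with (L + sum_f_R0 (fun k => (A (S N) * B k - A k * B (S N)) * (y ^ S N * x ^ k - x ^ S N * y ^ k)) N) end; [lra|].
    right. rewrite Hs. ring. }
  assert (HD1 : 0 < D 1%nat).
  { unfold D, P. simpl. rewrite !HA. pose proof (HB 0%nat). pose proof (HB 1%nat).
    pose proof (Hr 0%nat).
    replace ((r 0%nat * B 0%nat * 1 + r 1%nat * B 1%nat * (y * 1)) * (B 0%nat * 1 + B 1%nat * (x * 1)) -
      (r 0%nat * B 0%nat * 1 + r 1%nat * B 1%nat * (x * 1)) * (B 0%nat * 1 + B 1%nat * (y * 1)))
    with (B 0%nat * B 1%nat * (r 1%nat - r 0%nat) * (y - x)) by ring.
    apply Rmult_lt_0_compat; [|lra]. apply Rmult_lt_0_compat; [|lra]. nra. }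
  assert (HDge : forall n, (1 <= n)%nat -> D 1%nat <= D n).
  { intros n Hn. induction Hn. lra. pose proof (Hstep m); lra. }
  assert (Hlim : is_lim_seq D (SAy * SBx - SAx * SBy)).
  { unfold D, P. apply is_lim_seq_minus'; apply is_lim_seq_mult'; apply series_lim; auto. }
  pose proof (lim_ge D _ (D 1%nat) 1 Hlim HDge). lra.
Qed.

Lemma strict_convex (P : R -> Prop) (f f' : R -> R) :
  (forall x y z, P x -> P y -> x <= z <= y -> P z) ->
  (forall x, P x -> is_derive f x (f' x)) ->
  (forall x y, P x -> P y -> x < y -> f' x < f' y) ->
  forall x y t, P x -> P y -> x < y -> 0 < t < 1 ->
  f (t * x + (1 - t) * y) < t * f x + (1 - t) * f y.
Proof.
  intros Hcl Hd Hm x y t Px Py Hxy Ht.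
  set (z := t * x + (1 - t) * y).
  assert (Hz1 : x < z) by (unfold z; nra).
  assert (Hz2 : z < y) by (unfold z; nra).
  assert (Pz : P z) by (apply (Hcl x y); auto; lra).
  destruct (MVT_cor2 f f' x z Hz1) as [c1 [E1 H1]].
  { intros c Hc. apply is_derive_Reals. apply Hd. apply (Hcl x y); auto; lra. }
  destruct (MVT_cor2 f f' z y Hz2) as [c2 [E2 H2]].
  { intros c Hc. apply is_derive_Reals. apply Hd. apply (Hcl x y); auto; lra. }
  assert (Hc : f' c1 < f' c2).
  { apply Hm; try lra; apply (Hcl x y); auto; lra. }
  assert (Ezx : z - x = (1 - t) * (y - x)) by (unfold z; ring).
  assert (Eyz : y - z = t * (y - x)) by (unfold z; ring).
  assert (t * f x + (1 - t) * f y - f z = t * (1 - t) * (y - x) * (f' c2 - f' c1)).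
  { replace (t * f x + (1 - t) * f y - f z) with (- t * (f z - f x) + (1 - t) * (f y - f z)) by ring.
    rewrite E1, E2, Ezx, Eyz. ring. }
  assert (0 < t * (1 - t) * (y - x) * (f' c2 - f' c1)).
  { repeat apply Rmult_lt_0_compat; lra. }
  lra.
Qed.

Lemma convex_pack (P : R -> Prop) (f f' : R -> R) :
  (forall x y z, P x -> P y -> x <= z <= y -> P z) ->
  (forall x, P x -> is_derive f x (f' x)) ->
  (forall x y, P x -> P y -> x < y -> f' x < f' y) ->
  convex_on P f /\
  (forall x y, P x -> P y -> x <> y -> f ((x + y) / 2) < (f x + f y) / 2).
Proof.
  intros Hcl Hd Hm. pose proof (strict_convex P f f' Hcl Hd Hm) as S.
  split.
  - intros x y t Px Py Ht.
    destruct (Req_dec t 0) as [->|H0].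
    { replace (0 * x + (1 - 0) * y) with y by ring. lra. }
    destruct (Req_dec t 1) as [->|H1].
    { replace (1 * x + (1 - 1) * y) with x by ring. lra. }
    destruct (Rtotal_order x y) as [Hxy|[Hxy|Hxy]].
    + left. apply S; auto; lra.
    + subst. replace (t * y + (1 - t) * y) with y by ring. lra.
    + left. pose proof (S y x (1 - t) Py Px Hxy ltac:(lra)) as K.
      replace ((1 - t) * y + (1 - (1 - t)) * x) with (t * x + (1 - t) * y) in K by ring.
      lra.
  - intros x y Px Py Hxy.
    replace ((x + y) / 2) with (/2 * x + (1 - /2) * y) by field.
    destruct (Rtotal_order x y) as [H|[H|H]].
    + pose proof (S x y (/2) Px Py H ltac:(lra)). lra.
    + contradiction.
    + pose proof (S y x (/2) Py Px H ltac:(lra)) as K.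
      replace (/ 2 * y + (1 - / 2) * x) with (/2 * x + (1 - /2) * y) in K by field. lra.
Qed.

Lemma concave_pack (P : R -> Prop) (f f' : R -> R) :
  (forall x y z, P x -> P y -> x <= z <= y -> P z) ->
  (forall x, P x -> is_derive f x (f' x)) ->
  (forall x y, P x -> P y -> x < y -> f' y < f' x) ->
  concave_on P f /\
  (forall x y, P x -> P y -> x <> y -> (f x + f y) / 2 < f ((x + y) / 2)).
Proof.
  intros Hcl Hd Hm.
  destruct (convex_pack P (fun x => - f x) (fun x => - f' x) Hcl) as [C M].
  - intros x Px. apply (is_derive_opp f x (f' x)). auto.
  - intros x y Px Py H. pose proof (Hm x y Px Py H). lra.
  - split.
    + intros x y t Px Py Ht. pose proof (C x y t Px Py Ht). simpl in *. lra.
    + intros x y Px Py H. pose proof (M x y Px Py H). lra.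
Qed.

Lemma frac_lt u v p q : 0 < p -> 0 < q -> u * q < v * p -> u / p < v / q.
Proof.
  intros Hp Hq H. apply (Rmult_lt_reg_r (p * q)). nra.
  replace (u / p * (p * q)) with (u * q) by (field; lra).
  replace (v / q * (p * q)) with (v * p) by (field; lra). exact H.
Qed.

Lemma sqrt_exp_ln u v : 0 < u -> 0 < v -> sqrt (u * v) = exp ((ln u + ln v) / 2).
Proof.
  intros Hu Hv. transitivity (sqrt (exp (ln u) * exp (ln v))).
  rewrite !exp_ln; auto. rewrite <- exp_plus.
  replace (ln u + ln v) with ((ln u + ln v) / 2 + (ln u + ln v) / 2) at 1 by field.
  rewrite exp_plus. apply sqrt_square. left; apply exp_pos.
Qed.

Lemma is_derive_eq_l (f : R -> R) x (l l' : R) : is_derive f x l -> l = l' -> is_derive f x l'.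
Proof. intros H ->; exact H. Qed.

Ltac toR := unfold plus, opp, scal, mult; simpl; match goal with |- @eq _ ?u ?v => let H := fresh in assert (H : @eq R u v); [|exact H] end.

Lemma is_series_eq_l (u : nat -> R) (l l' : R) : is_series u l -> l = l' -> is_series u l'.
Proof. intros H ->; exact H. Qed.

Section Main.
Variables a b c : R.
Hypotheses (ha : 0 < a) (hb : 0 < b) (hc : 0 < c).

Let C := hyp_coef a b c.
Let F := hyp2F1 a b c.
Let F' := PSeries (PS_derive C).
Let e := fun n => PS_derive C n - INR n * C n.
Let E := fun x => (1 - x) * F' x.

Lemma F_deriv x : Rabs x < 1 -> is_derive F x (F' x).
Proof.
  intros H. apply (is_derive_PSeries C x). unfold C; rewrite radius_coef; auto.
Qed.

Lemma F_series x : Rabs x < 1 -> is_series (fun n => C n * x ^ n) (F x).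
Proof.
  intros H. apply Series_correct.
  assert (K : ex_pseries C x). { apply CV_radius_inside. unfold C; rewrite radius_coef; auto. }
  unfold ex_pseries in K. eapply ex_series_ext; [|exact K].
  intros n. rewrite pow_n_pow. change (scal (x ^ n) (C n)) with (x ^ n * C n). exact (Rmult_comm _ _).
Qed.

Lemma F'_series x : Rabs x < 1 -> is_series (fun n => PS_derive C n * x ^ n) (F' x).
Proof.
  intros H. apply Series_correct.
  assert (K : ex_pseries (PS_derive C) x).
  { apply CV_radius_inside. rewrite CV_radius_derive. unfold C; rewrite radius_coef; auto. }
  unfold ex_pseries in K. eapply ex_series_ext; [|exact K].
  intros n. rewrite pow_n_pow. change (scal (x ^ n) (PS_derive C n)) with (x ^ n * PS_derive C n). exact (Rmult_comm _ _).
Qed.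

Lemma E_series x : Rabs x < 1 -> is_series (fun n => e n * x ^ n) (E x).
Proof.
  intros H.
  assert (H1 : is_series (fun n => INR n * C n * x ^ n) (x * F' x)).
  { apply is_series_decr_1.
    eapply is_series_eq_l.
    eapply is_series_ext; [| apply (is_series_scal x _ _ (F'_series x H))].
    intros n. change (@eq R (x * (PS_derive C n * x ^ n)) (INR (S n) * C (S n) * x ^ S n)).
    unfold PS_derive. simpl. ring.
    simpl. unfold plus, opp, scal; simpl. unfold mult; simpl. toR. ring. }
  pose proof (is_series_minus _ _ _ _ (F'_series x H) H1) as K.
  replace (E x) with (plus (F' x) (opp (x * F' x))).
  2:{ change (F' x + - (x * F' x) = E x). unfold E. ring. }
  eapply is_series_ext; [| exact K].
  intros n. change (plus (PS_derive C n * x ^ n) (opp (INR n * C n * x ^ n))) with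
      (PS_derive C n * x ^ n + - (INR n * C n * x ^ n)). unfold e. toR. ring.
Qed.

Lemma C_pos n : 0 < C n.
Proof. apply coef_pos; auto. Qed.

Lemma F_pos x : 0 <= x < 1 -> 0 < F x.
Proof.
  intros H. assert (Hs := F_series x ltac:(rewrite Rabs_pos_eq; lra)).
  assert (K := series_ge_partial _ _ 0 Hs).
  simpl in K. assert (C 0%nat = 1) by (unfold C, hyp_coef; simpl; field).
  rewrite H0 in K. assert (1 * 1 <= F x). apply K.
  intros n. apply Rmult_le_pos. pose proof (C_pos n); lra. apply pow_le; lra. lra.
Qed.

Definition rr n := (a + INR n) * (b + INR n) / (c + INR n).

Lemma PSd_eq n : PS_derive C n = rr n * C n.
Proof. unfold PS_derive, C, rr. rewrite coef_rec; auto. ring. Qed.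

Lemma e_eq n : e n = (rr n - INR n) * C n.
Proof. unfold e. rewrite PSd_eq. ring. Qed.



Lemma part1_mono (hcond : a * b < c * (a + b + 1)) x y : 0 < x -> x < y -> y < 1 ->
  F' x / F x < F' y / F y.
Proof.
  intros H1 H2 H3.
  assert (R := ratio_lemma (PS_derive C) C rr x y (F' x) (F' y) (F x) (F y)
    ltac:(lra) C_pos PSd_eq).
  assert (Hr : forall n, rr n < rr (S n)).
  { intros n. unfold rr. rewrite S_INR. pose proof (pos_INR n).
    apply Rminus_lt_0.
    replace ((a + (INR n + 1)) * (b + (INR n + 1)) / (c + (INR n + 1)) - (a + INR n) * (b + INR n) / (c + INR n))
      with ((c * (a + b + 1) - a * b + INR n * INR n + INR n + 2 * c * INR n) / ((c + INR n) * (c + INR n + 1))) by (field; lra).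
    apply Rdiv_lt_0_compat. nra. apply Rmult_lt_0_compat; lra. }
  assert (Ax : Rabs x < 1) by (rewrite Rabs_pos_eq; lra).
  assert (Ay : Rabs y < 1) by (rewrite Rabs_pos_eq; lra).
  specialize (R Hr (F'_series x Ax) (F'_series y Ay) (F_series x Ax) (F_series y Ay)).
  apply frac_lt. apply F_pos; lra. apply F_pos; lra. lra.
Qed.

Lemma part2_mono (hcond : (a - c) * (b - c) > 0) x y : 0 < x -> x < y -> y < 1 ->
  E y / F y < E x / F x.
Proof.
  intros H1 H2 H3.
  assert (Ax : Rabs x < 1) by (rewrite Rabs_pos_eq; lra).
  assert (Ay : Rabs y < 1) by (rewrite Rabs_pos_eq; lra).
  assert (Sx : is_series (fun n => - e n * x ^ n) (- E x)).
  { eapply is_series_eq_l. eapply is_series_ext; [|apply (is_series_opp _ _ (E_series x Ax))].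
    intros n. toR. ring. toR. reflexivity. }
  assert (Sy : is_series (fun n => - e n * y ^ n) (- E y)).
  { eapply is_series_eq_l. eapply is_series_ext; [|apply (is_series_opp _ _ (E_series y Ay))].
    intros n. toR. ring. toR. reflexivity. }
  assert (R := ratio_lemma (fun n => - e n) C (fun n => - (rr n - INR n)) x y (- E x) (- E y) (F x) (F y)
    ltac:(lra) C_pos).
  assert (Hr : forall n, - (rr n - INR n) < - (rr (S n) - INR (S n))).
  { intros n. unfold rr. rewrite S_INR. pose proof (pos_INR n).
    apply Rminus_lt_0.
    replace (- ((a + (INR n + 1)) * (b + (INR n + 1)) / (c + (INR n + 1)) - (INR n + 1)) - - ((a + INR n) * (b + INR n) / (c + INR n) - INR n))
      with (((a - c) * (b - c)) / ((c + INR n) * (c + INR n + 1))) by (field; lra).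
    apply Rdiv_lt_0_compat. lra. apply Rmult_lt_0_compat; lra. }
  specialize (R ltac:(intros n; pose proof (e_eq n); cbv beta; nra) Hr Sx Sy (F_series x Ax) (F_series y Ay)).
  apply frac_lt. apply F_pos; lra. apply F_pos; lra. lra.
Qed.

Lemma part3_mono (hcond : a + b >= c) x y : 0 <= x -> x < y -> y < 1 -> E x < E y.
Proof.
  intros H1 H2 H3.
  assert (Ax : Rabs x < 1) by (rewrite Rabs_pos_eq; lra).
  assert (Ay : Rabs y < 1) by (rewrite Rabs_pos_eq; lra).
  assert (He : forall n, 0 < e n).
  { intros n. rewrite e_eq. apply Rmult_lt_0_compat; [|apply C_pos].
    unfold rr. pose proof (pos_INR n).
    replace ((a + INR n) * (b + INR n) / (c + INR n) - INR n) with
      ((a * b + INR n * (a + b - c)) / (c + INR n)) by (field; lra).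
    apply Rdiv_lt_0_compat; [|lra]. assert (0 <= INR n * (a + b - c)) by (apply Rmult_le_pos; lra).
    nra. }
  pose proof (is_series_minus _ _ _ _ (E_series y Ay) (E_series x Ax)) as K.
  assert (K' : is_series (fun n => e n * y ^ n - e n * x ^ n) (E y - E x)).
  { eapply is_series_eq_l. eapply is_series_ext; [|exact K]. intros n; toR; ring. toR; ring. }
  pose proof (series_ge_partial _ _ 1 K') as G.
  assert (0 < sum_f_R0 (fun n => e n * y ^ n - e n * x ^ n) 1).
  { simpl. pose proof (He 1%nat). nra. }
  assert (sum_f_R0 (fun n => e n * y ^ n - e n * x ^ n) 1 <= E y - E x).
  { apply G. intros n. pose proof (He n). pose proof (pow_incr x y n ltac:(lra)). nra. }
  lra.
Qed.

Let h := fun t => 1 - exp (- t).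

Lemma h_range t : 0 < t -> 0 < h t < 1.
Proof.
  intros Ht. unfold h. pose proof (exp_pos (- t)).
  assert (exp (- t) < 1) by (rewrite <- exp_0; apply exp_increasing; lra). lra.
Qed.

Lemma h_deriv t : is_derive h t (exp (- t)).
Proof. unfold h. auto_derive. auto. ring. Qed.

Lemma h_mono t s : t < s -> h t < h s.
Proof. intros H. unfold h. assert (exp (- s) < exp (- t)) by (apply exp_increasing; lra). lra. Qed.

Lemma D1 x : unit_open x -> is_derive (fun x => ln (F x)) x (F' x / F x).
Proof.
  intros [H1 H2]. eapply is_derive_eq_l.
  apply (is_derive_comp ln F x). apply is_derive_ln. apply F_pos; lra.
  apply F_deriv. rewrite Rabs_pos_eq; lra.
  change (F' x * / F x = F' x / F x). reflexivity.
Qed.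

Lemma D3 t : pos_open t -> is_derive (fun t => F (1 - exp (- t))) t (E (h t)).
Proof.
  intros Ht. pose proof (h_range t Ht). eapply is_derive_eq_l.
  apply (is_derive_comp F h t). apply F_deriv. rewrite Rabs_pos_eq; lra.
  apply h_deriv.
  change (exp (- t) * F' (h t) = E (h t)). unfold E, h. ring.
Qed.

Lemma D2 t : pos_open t -> is_derive (fun t => ln (F (1 - exp (- t)))) t (E (h t) / F (h t)).
Proof.
  intros Ht. pose proof (h_range t Ht). eapply is_derive_eq_l.
  apply (is_derive_comp ln (fun t => F (1 - exp (- t))) t). apply is_derive_ln. apply F_pos; unfold h in H; lra.
  apply D3; auto.
  change (E (h t) * / F (1 - exp (- t)) = E (h t) / F (h t)). reflexivity.
Qed.


Lemma part1 (h1 : a * b / (a + b + 1) < c) :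
  convex_on unit_open (fun x => ln (F x)) /\
  (forall x y, unit_open x -> unit_open y ->
     F ((x + y) / 2) <= sqrt (F x * F y) /\
     (F ((x + y) / 2) = sqrt (F x * F y) <-> x = y)).
Proof.
  assert (hcond : a * b < c * (a + b + 1)).
  { assert (a * b = (a * b / (a + b + 1)) * (a + b + 1)) by (field; lra). nra. }
  destruct (convex_pack unit_open (fun x => ln (F x)) (fun x => F' x / F x)) as [Cv M].
  - unfold unit_open; intros; lra.
  - apply D1.
  - intros x y [] [] Hxy. apply part1_mono; auto.
  - split; auto. intros x y Hx Hy.
    pose proof (F_pos x ltac:(destruct Hx; lra)). pose proof (F_pos y ltac:(destruct Hy; lra)).
    destruct (Req_dec x y) as [<-|Hne].
    + replace ((x + x) / 2) with x by field. rewrite sqrt_square by lra. split; [lra|tauto].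
    + pose proof (M x y Hx Hy Hne) as K. cbv beta in K.
      pose proof (F_pos ((x + y) / 2) ltac:(destruct Hx, Hy; lra)).
      rewrite sqrt_exp_ln by lra.
      assert (F ((x + y) / 2) < exp ((ln (F x) + ln (F y)) / 2)).
      { rewrite <- (exp_ln (F ((x + y) / 2))) by lra. apply exp_increasing. lra. }
      split; [lra|]. split; intro; [lra|contradiction].
Qed.

Lemma log_param x : 0 < x < 1 -> pos_open (- ln (1 - x)) /\ h (- ln (1 - x)) = x.
Proof.
  intros Hx. split.
  - unfold pos_open. assert (ln (1 - x) < 0) by (rewrite <- ln_1; apply ln_increasing; lra). lra.
  - unfold h. rewrite Ropp_involutive, exp_ln by lra. ring.
Qed.

Lemma mid_param x y : 0 < x < 1 -> 0 < y < 1 ->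
  h ((- ln (1 - x) + - ln (1 - y)) / 2) = 1 - sqrt ((1 - x) * (1 - y)).
Proof.
  intros Hx Hy. unfold h. rewrite sqrt_exp_ln by lra. f_equal. f_equal. field.
Qed.

Lemma param_inj x y : 0 < x < 1 -> 0 < y < 1 -> - ln (1 - x) = - ln (1 - y) -> x = y.
Proof.
  intros Hx Hy H. assert (1 - x = 1 - y) by (apply ln_inv; lra). lra.
Qed.

Lemma part2 (h2 : (a - c) * (b - c) > 0) :
  concave_on pos_open (fun t => ln (F (1 - exp (- t)))) /\
  (forall x y, unit_open x -> unit_open y ->
     sqrt (F x * F y) <= F (1 - sqrt ((1 - x) * (1 - y))) /\
     (sqrt (F x * F y) = F (1 - sqrt ((1 - x) * (1 - y))) <-> x = y)).
Proof.
  destruct (concave_pack pos_open (fun t => ln (F (1 - exp (- t)))) (fun t => E (h t) / F (h t))) as [Cv M].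
  - unfold pos_open; intros; lra.
  - apply D2.
  - intros t s Ht Hs Hts. pose proof (h_range t Ht). pose proof (h_range s Hs).
    pose proof (h_mono t s Hts). apply part2_mono; auto; lra.
  - split; auto. intros x y Hx Hy.
    pose proof (F_pos x ltac:(destruct Hx; lra)). pose proof (F_pos y ltac:(destruct Hy; lra)).
    destruct (Req_dec x y) as [<-|Hne].
    + replace (1 - sqrt ((1 - x) * (1 - x))) with x by (rewrite sqrt_square by (destruct Hx; lra); ring).
      rewrite sqrt_square by lra. split; [lra|tauto].
    + destruct (log_param x Hx) as [Pt Et]. destruct (log_param y Hy) as [Ps Es].
      assert (Hne' : - ln (1 - x) <> - ln (1 - y)) by (intro; apply Hne; apply param_inj; auto).
      pose proof (M _ _ Pt Ps Hne') as K. cbv beta in K.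
      pose proof (mid_param x y Hx Hy) as Em.
      pose proof (h_range ((- ln (1 - x) + - ln (1 - y)) / 2) ltac:(unfold pos_open in *; lra)) as Hm.
      unfold h in Et, Es, Em, Hm. rewrite Et, Es, Em in K. rewrite Em in Hm.
      pose proof (F_pos (1 - sqrt ((1 - x) * (1 - y))) ltac:(lra)).
      rewrite sqrt_exp_ln by lra.
      assert (exp ((ln (F x) + ln (F y)) / 2) < F (1 - sqrt ((1 - x) * (1 - y)))).
      { rewrite <- (exp_ln (F (1 - sqrt ((1 - x) * (1 - y))))) by lra. apply exp_increasing. lra. }
      split; [lra|]. split; intro; [lra|contradiction].
Qed.

Lemma part3 (h3 : a + b >= c) :
  convex_on pos_open (fun t => F (1 - exp (- t))) /\
  (forall x y, unit_open x -> unit_open y ->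
     F (1 - sqrt ((1 - x) * (1 - y))) <= (F x + F y) / 2 /\
     (F (1 - sqrt ((1 - x) * (1 - y))) = (F x + F y) / 2 <-> x = y)).
Proof.
  destruct (convex_pack pos_open (fun t => F (1 - exp (- t))) (fun t => E (h t))) as [Cv M].
  - unfold pos_open; intros; lra.
  - apply D3.
  - intros t s Ht Hs Hts. pose proof (h_range t Ht). pose proof (h_range s Hs).
    pose proof (h_mono t s Hts). apply part3_mono; auto; lra.
  - split; auto. intros x y Hx Hy.
    destruct (Req_dec x y) as [<-|Hne].
    + replace (1 - sqrt ((1 - x) * (1 - x))) with x by (rewrite sqrt_square by (destruct Hx; lra); ring).
      split; [lra|]. split; intro; [reflexivity|field].
    + destruct (log_param x Hx) as [Pt Et]. destruct (log_param y Hy) as [Ps Es].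
      assert (Hne' : - ln (1 - x) <> - ln (1 - y)) by (intro; apply Hne; apply param_inj; auto).
      pose proof (M _ _ Pt Ps Hne') as K. cbv beta in K.
      pose proof (mid_param x y Hx Hy) as Em.
      unfold h in Et, Es, Em. rewrite Et, Es, Em in K.
      split; [lra|]. split; intro; [lra|contradiction].
Qed.

End Main.

Theorem theorem1p3 (a b c : R) (ha : 0 < a) (hb : 0 < b) (hc : 0 < c) :
  let F := hyp2F1 a b c in
  (* (1) *)
  (a * b / (a + b + 1) < c ->
     convex_on unit_open (fun x => ln (F x)) /\
     (forall x y, unit_open x -> unit_open y ->
        F ((x + y) / 2) <= sqrt (F x * F y) /\
        (F ((x + y) / 2) = sqrt (F x * F y) <-> x = y))) /\
  (* (2) *)
  ((a - c) * (b - c) > 0 ->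
     concave_on pos_open (fun t => ln (F (1 - exp (- t)))) /\
     (forall x y, unit_open x -> unit_open y ->
        sqrt (F x * F y) <= F (1 - sqrt ((1 - x) * (1 - y))) /\
        (sqrt (F x * F y) = F (1 - sqrt ((1 - x) * (1 - y))) <-> x = y))) /\
  (* (3) *)
  (a + b >= c ->
     convex_on pos_open (fun t => F (1 - exp (- t))) /\
     (forall x y, unit_open x -> unit_open y ->
        F (1 - sqrt ((1 - x) * (1 - y))) <= (F x + F y) / 2 /\
        (F (1 - sqrt ((1 - x) * (1 - y))) = (F x + F y) / 2 <-> x = y))).
Proof.
  intros F. split; [|split].
  - intros H. exact (part1 a b c ha hb hc H).
  - intros H. exact (part2 a b c ha hb hc H).
  - intros H. exact (part3 a b c ha hb hc H).
Qed.
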